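(* Let $f:(0,1)\to(0,1)$ be of the form $f(p)=1-\sum_{k=1}^\infty c_k(1-p)^k$ with $c_k\ge 0$ and $\sum_{k=1}^\infty c_k=1$, and let $d_k$ be as defined below. Let $p\in(0,1)$ and let $X_1,X_2,\dots$ be i.i.d. Bernoulli random variables with parameter $p$. Then the output $Y$ of Algorithm 1 (described below) satisfies $\Pr[Y=1]=f(p)$.
   Context: Coefficients: $d_k = c_k/(1-\sum_{j=1}^{k-1}c_j)$ (if $c_K>0$ and $c_k=0$ for all $k>K$, then $d_K=1$ and $d_k$ for $k>K$ is not needed). Algorithm 1: let $U_1,U_2,\dots$ be i.i.d. uniform on $(0,1)$, independent of the $X_i$. Set $i=1$. (2) Take input $X_i$. (3) Let $V_i=1$ if $U_i<d_i$ and $V_i=0$ otherwise. (4) If $V_i=1$ or $X_i=1$, output $Y=X_i$ and stop; otherwise increase $i$ by $1$ and return to step (2). The number of inputs used, $N$, is the value of $i$ at stopping. *)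

(* Defs.v *)
From Stdlib Require Import Reals List.
Import ListNotations.
Open Scope R_scope.

Definition bern (q : R) (b : bool) : R := if b then q else 1 - q.

Fixpoint csum (c : nat -> R) (n : nat) : R :=
  match n with O => 0 | S m => csum c m + c (S m) end.

(* d_k = c_k / (1 - sum_{j<k} c_j); when the denominator vanishes the
   coefficient is "not needed" (the algorithm has surely stopped); we set it to 1. *)
Definition dcoef (c : nat -> R) (k : nat) : R :=
  let D := 1 - csum c (k - 1) in
  if Req_EM_T D 0 then 1 else c k / D.

Fixpoint bools (n : nat) : list (list bool) :=
  match n with
  | O => [ [] ]
  | S m => map (cons false) (bools m) ++ map (cons true) (bools m)
  end.

Definition lsum {A} (F : A -> R) (l : list A) : R :=
  fold_right (fun a s => F a + s) 0 l.

(* Joint probability of the prefix (X_i, V_i) = (xs_i, vs_i), i = i0, i0+1, ...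
   where X_i ~ Bernoulli(p), V_i = [U_i < d_i] ~ Bernoulli(d_i), all independent. *)
Fixpoint wt (c : nat -> R) (p : R) (i : nat) (xs vs : list bool) : R :=
  match xs, vs with
  | x :: xs', v :: vs' => bern p x * bern (dcoef c i) v * wt c p (S i) xs' vs'
  | _, _ => 1
  end.

(* Event "Algorithm 1 stops at the last step of the prefix and outputs Y = 1":
   at all earlier steps V_i = 0 and X_i = 0 (no stop), and at the last step X = 1
   (which forces the stop with output X = 1). *)
Fixpoint stop_out1 (xs vs : list bool) : bool :=
  match xs, vs with
  | [x], [v] => x
  | x :: xs', v :: vs' => negb x && negb v && stop_out1 xs' vs'
  | _, _ => false
  end.

(* Pr[N = n+1, Y = 1] *)
Definition prob_stop_out1 (c : nat -> R) (p : R) (n : nat) : R :=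
  lsum (fun xs => lsum (fun vs =>
          wt c p 1 xs vs * (if stop_out1 xs vs then 1 else 0)) (bools (S n)))
       (bools (S n)).

(* Main.v *)
Require Import Defs.
From Stdlib Require Import Reals.
Open Scope R_scope.

From Stdlib Require Import Lra Lia List.
Import ListNotations.
Lemma lsum_app {A} (F : A -> R) l1 l2 : lsum F (l1 ++ l2) = lsum F l1 + lsum F l2.
Proof. induction l1; simpl; [lra|]. unfold lsum in *; simpl. rewrite IHl1; lra. Qed.

Lemma lsum_map {A B} (F : B -> R) (g : A -> B) l : lsum F (map g l) = lsum (fun a => F (g a)) l.
Proof. induction l; simpl; auto. unfold lsum in *; simpl; rewrite IHl; auto. Qed.

Lemma lsum_ext_in {A} (F G : A -> R) l : (forall a, In a l -> F a = G a) -> lsum F l = lsum G l.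
Proof. induction l; simpl; intros H; auto. unfold lsum in *; simpl.
  rewrite H by auto. rewrite IHl; auto. Qed.

Lemma lsum_scal {A} (F : A -> R) k l : lsum (fun a => k * F a) l = k * lsum F l.
Proof. induction l; simpl; [unfold lsum; simpl; lra|]. unfold lsum in *; simpl. rewrite IHl; lra. Qed.

Lemma lsum_zero {A} (l : list A) : lsum (fun _ => 0) l = 0.
Proof. induction l; unfold lsum in *; simpl; auto. rewrite IHl; lra. Qed.

Lemma lsum_bools_S F m : lsum F (bools (S m)) =
  lsum (fun l => F (false :: l)) (bools m) + lsum (fun l => F (true :: l)) (bools m).
Proof. simpl. rewrite lsum_app, !lsum_map. auto. Qed.

Lemma In_bools m l : In l (bools m) -> length l = m.
Proof. revert l; induction m; simpl; intros l H.
  - destruct H as [<-|[]]; auto.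
  - apply in_app_iff in H; destruct H as [H|H]; apply in_map_iff in H;
    destruct H as [l' [<- H]]; simpl; rewrite (IHm l'); auto. Qed.

Definition G c p i n := lsum (fun xs => lsum (fun vs =>
          wt c p i xs vs * (if stop_out1 xs vs then 1 else 0)) (bools (S n)))
       (bools (S n)).

Lemma lsum_bools_sum F m : lsum F (bools m) = 1 -> True. Proof. auto. Qed.

Lemma bern_sum q F : F false * bern q false + F true * bern q true = F false + q * (F true - F false).
Proof. unfold bern. lra. Qed.

Lemma G0 c p i : G c p i 0 = p.
Proof. unfold G, lsum, wt, bern; simpl. lra. Qed.

Lemma GS c p i n : G c p i (S n) = (1 - p) * (1 - dcoef c i) * G c p (S i) n.
Proof.
  unfold G. rewrite lsum_bools_S.
  rewrite (lsum_ext_in _ (fun xs' => (1 - p) * (1 - dcoef c i) * lsum (fun vs =>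
          wt c p (S i) xs' vs * (if stop_out1 xs' vs then 1 else 0)) (bools (S n)))).
  2:{ intros xs' Hx. rewrite lsum_bools_S. rewrite <- lsum_scal.
      destruct xs' as [|y ys]; [apply In_bools in Hx; discriminate|].
      match goal with |- lsum ?F _ + lsum ?G _ = _ => rewrite (lsum_ext_in F (fun vs => (1 - p) * (1 - dcoef c i) *
     (wt c p (S i) (y :: ys) vs * (if stop_out1 (y :: ys) vs then 1 else 0)))) end.
      2:{ intros vs _. simpl. unfold bern. ring. }
      rewrite <- (Rplus_0_r (lsum _ _)) at 2. f_equal.
      transitivity (lsum (fun _ : list bool => 0) (bools (S n))); [apply lsum_ext_in; intros vs _; simpl; ring | apply lsum_zero]. }
  match goal with |- lsum ?F _ + lsum ?G _ = _ => rewrite (lsum_ext_in G (fun _ => 0)) end.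
  2:{ intros xs' Hx. rewrite lsum_bools_S.
      destruct xs' as [|y ys]; [apply In_bools in Hx; discriminate|].
      rewrite <- (Rplus_0_r 0) at 1. f_equal.
      - transitivity (lsum (fun _ : list bool => 0) (bools (S n))); [apply lsum_ext_in; intros vs _; simpl; ring | apply lsum_zero].
      - transitivity (lsum (fun _ : list bool => 0) (bools (S n))); [apply lsum_ext_in; intros vs _; simpl; ring | apply lsum_zero]. }
  rewrite lsum_zero, lsum_scal. ring.
Qed.
Fixpoint P (c : nat -> R) (i n : nat) : R :=
  match n with O => 1 | S m => (1 - dcoef c i) * P c (S i) m end.

Lemma G_P c p i n : G c p i n = p * (1 - p) ^ n * P c i n.
Proof. revert i; induction n; intros i.
  - rewrite G0. simpl. ring.
  - rewrite GS, IHn. simpl. ring. Qed.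

Lemma csum_sum c n : csum c (S n) = sum_f_R0 (fun k => c (S k)) n.
Proof. induction n; simpl; [ring|]. simpl in IHn. rewrite <- IHn. ring. Qed.

Section S.
Variable c : nat -> R.
Hypothesis hc : forall k, (1 <= k)%nat -> 0 <= c k.
Hypothesis hsum : infinite_sum (fun k => c (S k)) 1.

Lemma csum_le1 n : csum c n <= 1.
Proof. destruct n; [simpl; lra|]. rewrite csum_sum.
  apply growing_ineq.
  - intro m. simpl. assert (0 <= c (S (S m))) by (apply hc; lia). lra.
  - exact hsum. Qed.

Lemma csum_mono k m : csum c k <= csum c (k + m).
Proof. induction m. rewrite Nat.add_0_r; lra.
  rewrite Nat.add_succ_r. simpl. assert (0 <= c (S (k + m))) by (apply hc; lia). lra. Qed.

Lemma P_key n : forall i, (1 <= i)%nat -> P c i n * (1 - csum c (i-1)) = 1 - csum c (i-1+n).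
Proof. induction n; intros i Hi.
  - simpl. rewrite Nat.add_0_r. ring.
  - simpl P. unfold dcoef. destruct (Req_EM_T (1 - csum c (i - 1)) 0) as [E|E].
    + rewrite E. pose proof (csum_mono (i-1) (S n)). pose proof (csum_le1 (i-1+S n)). lra.
    + specialize (IHn (S i) ltac:(lia)). replace (S i - 1)%nat with i in IHn by lia.
      replace (i - 1 + S n)%nat with (i + n)%nat by lia. rewrite <- IHn.
      replace (csum c i) with (csum c (i-1) + c i).
      2:{ destruct i; [lia|]. simpl. replace (i-0)%nat with i by lia. auto. }
      field. auto.
Qed.

Lemma P1 n : P c 1 n = 1 - csum c n.
Proof. pose proof (P_key n 1 (le_n 1)). simpl in H. replace (n - 0)%nat with n in H by lia. lra. Qed.
End S.

Theorem theorem1 (c : nat -> R)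
  (hc : forall k, (1 <= k)%nat -> 0 <= c k)
  (hsum : infinite_sum (fun k => c (S k)) 1)
  (p : R) (hp : 0 < p < 1)
  (s : R) (hs : infinite_sum (fun k => c (S k) * (1 - p) ^ (S k)) s) :
  infinite_sum (prob_stop_out1 c p) (1 - s).
Proof.
  set (q := 1 - p).
  set (T := fun n => q ^ n * (1 - csum c n)).
  assert (Hterm : forall n, prob_stop_out1 c p n = T n - T (S n) - c (S n) * q ^ (S n)).
  { intro n. change (prob_stop_out1 c p n) with (G c p 1 n). rewrite G_P, P1 by auto.
    unfold T, q. simpl. ring. }
  assert (Hpart : forall n, sum_f_R0 (prob_stop_out1 c p) n =
     1 - T (S n) - sum_f_R0 (fun k => c (S k) * (1 - p) ^ (S k)) n).
  { induction n; simpl sum_f_R0; rewrite Hterm; [|rewrite IHn]; unfold T, q; simpl; ring. }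
  assert (HT : forall n, 0 <= T n <= q ^ n).
  { intro n. unfold T. pose proof (csum_le1 c hc hsum n).
    assert (0 <= csum c n).
    { induction n; simpl; [lra|]. assert (0 <= c (S n)) by (apply hc; lia).
      pose proof (csum_le1 c hc hsum n). lra. }
    assert (0 <= q ^ n) by (apply pow_le; unfold q; lra).
    split; [apply Rmult_le_pos; lra|].
    rewrite <- (Rmult_1_r (q ^ n)) at 2. apply Rmult_le_compat_l; lra. }
  intros eps Heps.
  destruct (hs (eps/2) ltac:(lra)) as [N1 HN1].
  destruct (pow_lt_1_zero q ltac:(unfold q; rewrite Rabs_right; lra) (eps/2) ltac:(lra)) as [N2 HN2].
  exists (N1 + N2)%nat. intros n Hn.
  unfold Rdist. rewrite Hpart.
  specialize (HN1 n ltac:(lia)). specialize (HN2 (S n) ltac:(lia)).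
  unfold Rdist in HN1. pose proof (HT (S n)).
  rewrite Rabs_right in HN2 by (apply Rle_ge, pow_le; unfold q; lra).
  revert HN1. set (S0 := sum_f_R0 _ n). intros HN1.
  apply Rabs_def2 in HN1. apply Rabs_def1; lra.
Qed.
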